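(* Every Collatz trajectory $(n,C(n),C^2(n),\dots)$, $n\in\mathbb{N}^+$, that does not contain $1$ contains some element $m\equiv 6\pmod 8$.
   Context: $C:\mathbb{N}^+\to\mathbb{N}^+$ is the Collatz function $C(n)=n/2$ for $n$ even and $C(n)=3n+1$ for $n$ odd. *)

(* Defs.v *)
From mathcomp Require Import all_boot.

Definition collatz (n : nat) : nat := if odd n then 3 * n + 1 else n./2.

(* Main.v *)
Require Import Defs.
From mathcomp Require Import all_boot.
From mathcomp Require Import zify.
From Stdlib Require Import Classical.

Lemma coll_even m : m %% 2 = 0 -> collatz m = m %/ 2.
Proof. rewrite /collatz divn2 modn2; by case: odd. Qed.

Lemma coll_odd m : m %% 2 = 1 -> collatz m = 3 * m + 1.
Proof. rewrite /collatz modn2; by case: odd. Qed.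

Lemma key m : 0 < m -> (m %% 2 = 0 \/ m %% 4 = 1) ->
  (forall k, iter k collatz m %% 8 <> 6) -> exists k, iter k collatz m = 1.
Proof.
elim: m {-2}m (leqnn m) => [|N IH] m Hm Hpos; first by lia.
move=> Hc H.
case: (eqVneq m 1) => [->|m1]; first by exists 0.
case: Hc => Hc.
- have Hq : collatz m = m %/ 2 by apply: coll_even.
  have H0 := H 0; rewrite /= in H0.
  have [k Hk] : exists k, iter k collatz (m %/ 2) = 1.
    apply: (IH (m %/ 2)); try lia.
    move=> k; rewrite -Hq -iterSr; exact: H.
  by exists k.+1; rewrite iterSr Hq.
- have Hm1 : collatz m = 3 * m + 1 by apply: coll_odd; lia.
  have Hm2 : collatz (3 * m + 1) = (3 * m + 1) %/ 2 by apply: coll_even; lia.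
  have Hm3 : collatz ((3 * m + 1) %/ 2) = (3 * m + 1) %/ 4
    by rewrite coll_even; lia.
  have E3 : iter 3 collatz m = (3 * m + 1) %/ 4 by rewrite /= Hm1 Hm2 Hm3.
  have E2 : iter 2 collatz m = (3 * m + 1) %/ 2 by rewrite /= Hm1 Hm2.
  have H2 := H 2; rewrite E2 in H2.
  have [k Hk] : exists k, iter k collatz ((3 * m + 1) %/ 4) = 1.
    apply: (IH ((3 * m + 1) %/ 4)); try lia.
    move=> k; rewrite -E3 -iterD; exact: H.
  by exists (k + 3); rewrite iterD E3.
Qed.

Theorem mainTheorem14 (n : nat) :
  0 < n ->
  (forall k : nat, iter k collatz n <> 1) ->
  exists k : nat, iter k collatz n %% 8 = 6.
Proof.
move=> Hn Hno; apply: NNPP => Hne.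
have H : forall k, iter k collatz n %% 8 <> 6 by move=> k Hk; apply: Hne; exists k.
case: (ltnP (n %% 2) 1) => Hp.
- have Hp0 : n %% 2 = 0 by lia.
  have [k Hk] := @key n Hn (or_introl Hp0) H.
  exact: (Hno k).
- have E1 : iter 1 collatz n = 3 * n + 1 by rewrite /= coll_odd; lia.
  have [k Hk] : exists k, iter k collatz (3 * n + 1) = 1.
    apply: key; try lia.
    move=> k; rewrite -E1 -iterD; exact: H.
  by apply: (Hno (k + 1)); rewrite iterD E1.
Qed.
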